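(* Let $R$ be a commutative ring and $B,B'$ two quadratically presented $R$-modules fitting into exact sequences of $R$-modules $0\to A\to B\to C\to0$ and $0\to A'\to B'\to C\to0$. Then $\mathrm{Fitt}_R(A)\mathrm{Fitt}_R(B')=\mathrm{Fitt}_R(A')\mathrm{Fitt}_R(B)$.
   Context: An $R$-module $N$ is quadratically presented if there exist $m\ge1$ and an exact sequence $R^m\to R^m\to N\to0$. $\mathrm{Fitt}_R$ denotes the $0$th Fitting ideal. *)

(* Defs.v *)
From HB Require Import structures.
From mathcomp Require Import all_boot all_order all_algebra.
Set Implicit Arguments. Unset Strict Implicit. Unset Printing Implicit Defensive.
Import Order.TTheory GRing.Theory Num.Theory.
Local Open Scope ring_scope.

Definition ideal_mul (R : comPzRingType) (I J : R -> Prop) (r : R) : Prop :=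
  exists (k : nat) (a b : 'I_k -> R),
    (forall i, I (a i) /\ J (b i)) /\ r = \sum_(i < k) a i * b i.

Definition fitt_gen (R : comPzRingType) (M : lmodType R) (r : R) : Prop :=
  exists (n : nat) (x : 'I_n -> M) (X : 'M[R]_n),
    (forall m : M, exists c : 'I_n -> R, m = \sum_(j < n) c j *: x j) /\
    (forall i : 'I_n, \sum_(j < n) X i j *: x j = 0) /\
    r = \det X.

(* 0-th Fitting ideal: the ideal generated by all such determinants.
   (For a finitely generated module this is the usual Fitt_0, independent of
   the generating family; for a non-finitely generated module it is the zero
   ideal.) *)
Definition Fitt (R : comPzRingType) (M : lmodType R) (r : R) : Prop :=
  exists (k : nat) (c g : 'I_k -> R),
    (forall i, fitt_gen M (g i)) /\ r = \sum_(i < k) c i * g i.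

Definition quad_presented (R : comPzRingType) (N : lmodType R) : Prop :=
  exists (m : nat) (P : 'M[R]_m) (psi : {linear 'rV[R]_m -> N}),
    (0 < m)%N /\
    (forall y : N, exists v : 'rV[R]_m, psi v = y) /\
    (forall v : 'rV[R]_m, psi v = 0 <-> exists w : 'rV[R]_m, v = w *m P).

Definition short_exact (R : comPzRingType) (A B C : lmodType R)
  (f : {linear A -> B}) (g : {linear B -> C}) : Prop :=
  injective f /\
  (forall c : C, exists b : B, g b = c) /\
  (forall b : B, g b = 0 <-> exists a : A, f a = b).

(* Main.v *)
Require Import Defs.
From HB Require Import structures.
From mathcomp Require Import all_boot all_order all_algebra.
Import GRing.Theory.
Local Open Scope ring_scope.

Definition cat {T : Type} {n m} (x : 'I_n -> T) (y : 'I_m -> T) (k : 'I_(n + m)) : T :=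
  match split k with inl i => x i | inr j => y j end.

Lemma cat_l {T : Type} {n m} (x : 'I_n -> T) (y : 'I_m -> T) i : cat x y (lshift m i) = x i.
Proof. by rewrite /cat (unsplitK (inl _ i)). Qed.
Lemma cat_r {T : Type} {n m} (x : 'I_n -> T) (y : 'I_m -> T) i : cat x y (rshift n i) = y i.
Proof. by rewrite /cat (unsplitK (inr _ i)). Qed.

Section Comb.
Context {R : comPzRingType} {M : lmodType R}.

Definition L {n} (x : 'I_n -> M) (c : 'rV[R]_n) : M := \sum_j c 0 j *: x j.

Lemma LD n (x : 'I_n -> M) c d : L x (c + d) = L x c + L x d.
Proof. by rewrite /L -big_split; apply: eq_bigr => j _; rewrite mxE scalerDl. Qed.

Lemma LZ n (x : 'I_n -> M) a c : L x (a *: c) = a *: L x c.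
Proof. by rewrite /L scaler_sumr; apply: eq_bigr => j _; rewrite mxE scalerA. Qed.

Lemma L0 n (x : 'I_n -> M) : L x 0 = 0.
Proof. by rewrite /L big1 // => j _; rewrite mxE scale0r. Qed.

Lemma LN n (x : 'I_n -> M) c : L x (- c) = - L x c.
Proof. by rewrite -(scaleN1r c) LZ scaleN1r. Qed.

Lemma LB n (x : 'I_n -> M) c d : L x (c - d) = L x c - L x d.
Proof. by rewrite LD LN. Qed.

Lemma Lmul n p (x : 'I_n -> M) (c : 'rV_p) (X : 'M_(p, n)) :
  L x (c *m X) = L (fun i => L x (row i X)) c.
Proof.
rewrite /L; under eq_bigr => j _ do rewrite mxE scaler_suml.
rewrite exchange_big /=; apply: eq_bigr => i _.
rewrite scaler_sumr; apply: eq_bigr => j _.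
by rewrite mxE scalerA.
Qed.

Lemma Ldelta n (x : 'I_n -> M) i : L x (delta_mx 0 i) = x i.
Proof.
rewrite /L (bigD1 i) //= big1 ?addr0 => [|j /negPf ji]; rewrite mxE.
  by rewrite !eqxx scale1r.
by rewrite ji andbF scale0r.
Qed.

Lemma Lrow n (x : 'I_n -> M) (c : 'I_n -> R) :
  L x (\row_j c j) = \sum_j c j *: x j.
Proof. by apply: eq_bigr => j _; rewrite mxE. Qed.

Lemma Lext {n} {x y : 'I_n -> M} c : (forall i, x i = y i) -> L x c = L y c.
Proof. by move=> e; apply: eq_bigr => j _; rewrite e. Qed.


Lemma L_cat n m (x : 'I_n -> M) (y : 'I_m -> M) c d :
  L (cat x y) (row_mx c d) = L x c + L y d.
Proof.
rewrite /L big_split_ord /=; congr (_ + _); apply: eq_bigr => j _.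
  by rewrite row_mxEl cat_l.
by rewrite row_mxEr cat_r.
Qed.

Lemma Lrow_i n p (x : 'I_n -> M) (X : 'M_(p, n)) i :
  L x (row i X) = \sum_j X i j *: x j.
Proof. by apply: eq_bigr => j _; rewrite mxE. Qed.

Lemma Lzero n (c : 'rV[R]_n) : L (fun _ => (0 : M)) c = 0.
Proof. by rewrite /L big1 // => j _; rewrite scaler0. Qed.

Lemma row_id n (v : 'rV[R]_n) : \row_j v 0 j = v.
Proof. by apply/rowP => j; rewrite mxE. Qed.

End Comb.

Lemma Lmap {R : comPzRingType} {M N : lmodType R} (h : {linear M -> N}) n (x : 'I_n -> M) c :
  h (L x c) = L (fun i => h (x i)) c.
Proof. by rewrite /L linear_sum; apply: eq_bigr => j _; rewrite linearZ. Qed.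

Lemma Ldecomp {R : comPzRingType} {N : lmodType R} {n} (psi : {linear 'rV[R]_n -> N}) v :
  psi v = L (fun i => psi (delta_mx 0 i)) v.
Proof. by rewrite {1}(row_sum_delta v) linear_sum; apply: eq_bigr => j _; rewrite linearZ. Qed.

Lemma genL {R : comPzRingType} {M : lmodType R} {n} {x : 'I_n -> M} :
  (forall m : M, exists c : 'I_n -> R, m = \sum_(j < n) c j *: x j) ->
  forall m, exists c, m = L x c.
Proof. by move=> h m; have [c ->] := h m; exists (\row_j c j); rewrite Lrow. Qed.

Lemma relL {R : comPzRingType} {M : lmodType R} {n p} {x : 'I_n -> M} {X : 'M_(p, n)} :
  (forall i, \sum_(j < n) X i j *: x j = 0) -> forall c, L x (c *m X) = 0.
Proof.
move=> h c; rewrite Lmul (Lext (y := fun _ => 0)) ?Lzero // => i.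
by rewrite Lrow_i h.
Qed.

Lemma key1 (R : comPzRingType) (A M N : lmodType R)
  (f : {linear A -> M}) (g : {linear M -> N}) a b :
  short_exact f g -> fitt_gen A a -> fitt_gen N b -> fitt_gen M (a * b).
Proof.
move=> [finj [gsurj gker]] [k [x [X [xgen [xrel ->]]]]] [n [y [Y [ygen [yrel ->]]]]].
have gf : forall a, g (f a) = 0 := fun a => (gker (f a)).2 (ex_intro _ a erefl).
have [yt hyt] := fin_all_exists (fun j => gsurj (y j)).
have xg := genL xgen; have yg := genL ygen.
have xr := relL xrel.
have : forall i, exists zi : 'rV_k, L yt (row i Y) = f (L x zi).
  move=> i.
  have : g (L yt (row i Y)) = 0.
    by rewrite Lmap (Lext (y := y)) // Lrow_i yrel.
  move=> /gker [a' ha']; have [d hd] := xg a'.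
  by exists d; rewrite -ha' hd.
case/fin_all_exists => z hz.
pose Z := \matrix_i z i.
exists (k + n)%N, (cat (fun l => f (x l)) yt), (block_mx X 0 (- Z) Y).
split; last split; last by rewrite det_lblock.
- move=> m; have [c hc] := yg (g m).
  have : g (m - L yt c) = 0.
    by rewrite linearB Lmap (Lext (y := y)) // -hc subrr.
  move=> /gker [a' ha']; have [d hd] := xg a'.
  exists (fun j => row_mx d c 0 j); rewrite -Lrow row_id L_cat -Lmap -hd ha'.
  by rewrite subrK.
- have H : forall c, L (cat (fun l => f (x l)) yt) (c *m block_mx X 0 (- Z) Y) = 0.
    move=> c; rewrite -(hsubmxK c) mul_row_block L_cat mulmx0 add0r mulmxN LD LN.
    rewrite -!Lmap xr linear0 add0r Lmul (Lext (y := fun i => f (L x (row i Z)))).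
      by rewrite -Lmap -Lmul addNr.
    by move=> i; rewrite hz rowK.
  by move=> i; rewrite -Lrow_i rowE H.
Qed.

Lemma LsubF {R : comPzRingType} {M : lmodType R} {n} (x y : 'I_n -> M) c :
  L (fun j => x j - y j) c = L x c - L y c.
Proof. by rewrite /L -sumrB; apply: eq_bigr => j _; rewrite scalerBr. Qed.

Lemma key2 (R : comPzRingType) (A M N : lmodType R)
  (f : {linear A -> M}) (g : {linear M -> N}) d :
  short_exact f g -> quad_presented N -> fitt_gen M d ->
  exists a p, fitt_gen A a /\ fitt_gen N p /\ d = a * p.
Proof.
move=> [finj [gsurj gker]] [m [P [psi [_ [psurj pker]]]]] [n [z [W [zgen [zrel ->]]]]].
have gf : forall a, g (f a) = 0 := fun a => (gker (f a)).2 (ex_intro _ a erefl).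
have zg := genL zgen; have zr := relL zrel.
pose E i := psi (delta_mx 0 i).
have pE : forall v, psi v = L E v := fun v => Ldecomp psi v.
have : forall j, exists vj : 'rV_m, psi vj = g (z j) by move=> j; apply: psurj.
case/fin_all_exists => v hv; pose V := \matrix_j v j.
have F1 : forall c, g (L z c) = psi (c *m V).
  move=> c; rewrite Lmap pE Lmul; apply: Lext => j.
  by rewrite -pE rowK hv.
have : forall i, exists ti : 'rV_n, psi (delta_mx 0 i) = g (L z ti).
  move=> i; have [b hb] := gsurj (psi (delta_mx 0 i)).
  by have [c hc] := zg b; exists c; rewrite -hc hb.
case/fin_all_exists => t ht; pose T := \matrix_i t i.
pose et i := L z (row i T).
have F2 : forall c, g (L et c) = psi c.
  by move=> c; rewrite Lmap pE; apply: Lext => i; rewrite /et rowK -ht.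
have : forall k, exists q : 'rV_m, row k (W *m V) = q *m P.
  move=> k; apply/pker; rewrite row_mul -F1.
  by rewrite rowE zr linear0.
case/fin_all_exists => q hq; pose Q := \matrix_k q k.
have WVQP : W *m V = Q *m P.
  by apply/row_matrixP => k; rewrite !row_mul /Q rowK -hq row_mul.
have : forall i, exists h : 'rV_m, row i (1%:M - T *m V) = h *m P.
  move=> i; apply/pker.
  rewrite rowE mulmxBr mulmx1 mulmxA -rowE linearB -F1 /T rowK -ht /= subrr //.
case/fin_all_exists => h hh; pose H := \matrix_i h i.
have HP : 1%:M - T *m V = H *m P.
  by apply/row_matrixP => k; rewrite [in RHS]row_mul /H rowK -hh.
have : forall j, exists aj : A, f aj = z j - L et (row j V).
  by move=> j; apply/gker; rewrite linearB F2 /V rowK hv subrr.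
case/fin_all_exists => a ha.
have : forall l, exists bl : A, f bl = L et (row l P).
  by move=> l; apply/gker; rewrite F2; apply/pker; exists (delta_mx 0 l); rewrite rowE.
case/fin_all_exists => b hb.
pose y := cat a b.
have Lf : forall c1 c2, f (L y (row_mx c1 c2)) = L z c1 - L et (c1 *m V) + L et (c2 *m P).
  move=> c1 c2; rewrite L_cat linearD !(Lmap f) (Lext (y := fun j => z j - L et (row j V))) //.
  by rewrite LsubF (Lext (y := fun l => L et (row l P))) // -(Lmul _ _ et c1 V) -(Lmul _ _ et c2 P).
pose K := block_mx W Q (- T) H.
have Krel : forall c, L y (c *m K) = 0.
  move=> c; apply: finj; rewrite linear0 -(hsubmxK c) mul_row_block Lf.
  set c1 := lsubmx c; set c2 := rsubmx c.
  rewrite LD zr add0r mulmxN LN (Lmul _ _ z c2 T) (Lext (y := et)) //.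
  rewrite -LN -LB -LD.
  rewrite mulmxBl mulmxDl -!mulmxA WVQP -HP mulmxBr mulmx1.
  set u := c1 *m (Q *m P); set w := c2 *m (T *m V).
  by rewrite -opprD addrC (addrCA u) subrr L0.
have Kgen : forall a' : A, exists c : 'I_(n + m) -> R, a' = \sum_(j < n + m) c j *: y j.
  move=> a'; have [c hc] := zg (f a').
  have : psi (c *m V) = 0 by rewrite -F1 -hc gf.
  move=> /pker [w hw].
  exists (fun j => row_mx c w 0 j); rewrite -Lrow row_id; apply: finj.
  by rewrite Lf hw subrK hc.
have Kdet : \det W = \det K * \det P.
  have e : K *m block_mx 1%:M 0 0 P = block_mx W 0 (- T) 1%:M *m block_mx 1%:M V 0 1%:M.
    rewrite !mulmx_block ?mulmx1 ?mulmx0 ?mul0mx ?mul1mx ?addr0 ?add0r.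
    by rewrite WVQP -HP addrC mulNmx.
  move: (congr1 determinant e); rewrite !det_mulmx det_lblock det_ublock det_lblock !det1.
  by rewrite mul1r !mulr1 => ->.
exists (\det K), (\det P); split; last split => //.
  exists (n + m)%N, y, K; split => //; split => // i.
  by rewrite -Lrow_i rowE Krel.
exists m, E, P; split; last split => //.
  by move=> x; have [v' <-] := psurj x; exists (fun j => v' 0 j); rewrite pE.
move=> i; rewrite -Lrow_i -pE; apply/pker; exists (delta_mx 0 i); exact: rowE.
Qed.
Section PB.
Context {R : comPzRingType} {B B' C : lmodType R} (g : {linear B -> C}) (g' : {linear B' -> C}).

Definition pbp : {pred B * B'} := fun p => g p.1 == g' p.2.

Lemma pbp_closed : submod_closed pbp.
Proof.
split; first by rewrite unfold_in /pbp /= !linear0.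
move=> a u v; rewrite !unfold_in /pbp /= => /eqP hu /eqP hv.
by rewrite !linearD !linearZ /= hu hv.
Qed.

HB.instance Definition _ := GRing.isSubmodClosed.Build R (B * B')%type pbp pbp_closed.

Record pb := PB { pbval :> B * B' ; _ : pbval \in pbp }.
HB.instance Definition _ := [isSub for pbval].
HB.instance Definition _ := [Choice of pb by <:].
HB.instance Definition _ := [SubChoice_isSubLmodule of pb by <:].

Definition pb1 (p : pb) : B := (val p).1.
Definition pb2 (p : pb) : B' := (val p).2.
Lemma pb1_lin : linear pb1. Proof. by move=> a u v. Qed.
Lemma pb2_lin : linear pb2. Proof. by move=> a u v. Qed.
HB.instance Definition _ := GRing.isLinear.Build R pb B _ pb1 pb1_lin.
HB.instance Definition _ := GRing.isLinear.Build R pb B' _ pb2 pb2_lin.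

Lemma pbP (p : pb) : g (pb1 p) = g' (pb2 p).
Proof. case: p => [[b b'] h]; rewrite /pb1 /pb2 /=; move: h; rewrite unfold_in /pbp. by move/eqP. Qed.

End PB.

Section Inj.
Context {R : comPzRingType} {A B B' C : lmodType R} (g : {linear B -> C}) (g' : {linear B' -> C}).
Context (f : {linear A -> B}) (gf : forall a, g (f a) = 0).

Lemma in1 a : (f a, 0) \in pbp g g'.
Proof. by rewrite unfold_in /pbp /= gf linear0. Qed.
Definition pbi1 a : pb g g' := @PB _ _ _ _ g g' (f a, 0) (in1 a).
Lemma pbi1_lin : linear pbi1.
Proof. move=> a u v; apply: val_inj => /=; rewrite linearP. by change ((a *: f u + f v, 0 : B') = (a *: f u + f v, a *: (0 : B') + 0)); rewrite scaler0 addr0. Qed.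
HB.instance Definition _ := GRing.isLinear.Build R A (pb g g') _ pbi1 pbi1_lin.
End Inj.

Section Inj2.
Context {R : comPzRingType} {A' B B' C : lmodType R} (g : {linear B -> C}) (g' : {linear B' -> C}).
Context (f' : {linear A' -> B'}) (gf' : forall a, g' (f' a) = 0).

Lemma in2 a : (0, f' a) \in pbp g g'.
Proof. by rewrite unfold_in /pbp /= gf' linear0. Qed.
Definition pbi2 a : pb g g' := @PB _ _ _ _ g g' (0, f' a) (in2 a).
Lemma pbi2_lin : linear pbi2.
Proof. move=> a u v; apply: val_inj => /=; rewrite linearP. by change ((0 : B, a *: f' u + f' v) = (a *: (0 : B) + 0, a *: f' u + f' v)); rewrite scaler0 addr0. Qed.
HB.instance Definition _ := GRing.isLinear.Build R A' (pb g g') _ pbi2 pbi2_lin.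
End Inj2.

Section Closure.
Context {R : comPzRingType}.

Lemma cat_all {T : Type} (P : T -> Prop) {n m} (x : 'I_n -> T) (y : 'I_m -> T) :
  (forall i, P (x i)) -> (forall j, P (y j)) -> forall k, P (cat x y k).
Proof. by move=> hx hy k; rewrite /cat; case: split. Qed.

Lemma cat_all2 {T : Type} (P : T -> T -> Prop) {n m} (x x' : 'I_n -> T) (y y' : 'I_m -> T) :
  (forall i, P (x i) (x' i)) -> (forall j, P (y j) (y' j)) -> forall k, P (cat x y k) (cat x' y' k).
Proof. by move=> hx hy k; rewrite /cat; case: split. Qed.

Lemma sum_cat {n m} (x : 'I_n -> R) (y : 'I_m -> R) (F : R -> R -> R) (c d : 'I_n -> R) (c' d' : 'I_m -> R) :
  \sum_(i < n + m) F (cat c c' i) (cat d d' i) =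
  \sum_(i < n) F (c i) (d i) + \sum_(i < m) F (c' i) (d' i).
Proof. by rewrite big_split_ord; congr (_ + _); apply: eq_bigr => i _; rewrite ?cat_l ?cat_r. Qed.

Section F.
Context {M : lmodType R}.
Lemma Fitt0 : Fitt M 0.
Proof. by exists 0%N, (fun _ => 0), (fun _ => 0); split; [by move=> [] | by rewrite big_ord0]. Qed.
Lemma FittD r1 r2 : Fitt M r1 -> Fitt M r2 -> Fitt M (r1 + r2).
Proof.
move=> [k1 [c1 [g1 [h1 ->]]]] [k2 [c2 [g2 [h2 ->]]]].
exists (k1 + k2)%N, (cat c1 c2), (cat g1 g2); split; first exact: cat_all.
by rewrite (sum_cat c1 c2 (fun a b => a * b)).
Qed.
Lemma FittM a r : Fitt M r -> Fitt M (a * r).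
Proof.
move=> [k [c [g' [h ->]]]]; exists k, (fun i => a * c i), g'; split => //.
by rewrite mulr_sumr; apply: eq_bigr => i _; rewrite mulrA.
Qed.
Lemma Fitt_of r : fitt_gen M r -> Fitt M r.
Proof. by move=> h; exists 1%N, (fun _ => 1), (fun _ => r); split => //; rewrite big_ord1 mul1r. Qed.
End F.

Section IM.
Context (I J : R -> Prop) (hI : forall a x, I x -> I (a * x)).
Lemma IM0 : ideal_mul I J 0.
Proof. by exists 0%N, (fun _ => 0), (fun _ => 0); split; [by move=> [] | by rewrite big_ord0]. Qed.
Lemma IMD r1 r2 : ideal_mul I J r1 -> ideal_mul I J r2 -> ideal_mul I J (r1 + r2).
Proof.
move=> [k1 [c1 [g1 [h1 ->]]]] [k2 [c2 [g2 [h2 ->]]]].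
exists (k1 + k2)%N, (cat c1 c2), (cat g1 g2); split; first exact: (cat_all2 (fun a b => I a /\ J b)).
by rewrite (sum_cat c1 c2 (fun a b => a * b)).
Qed.
Lemma IMM a r : ideal_mul I J r -> ideal_mul I J (a * r).
Proof.
move=> [k [c [g' [h ->]]]]; exists k, (fun i => a * c i), g'; split.
  by move=> i; have [h1 h2] := h i; split => //; exact: hI.
by rewrite mulr_sumr; apply: eq_bigr => i _; rewrite mulrA.
Qed.
Lemma IM_of a b : I a -> J b -> ideal_mul I J (a * b).
Proof. by move=> ha hb; exists 1%N, (fun _ => a), (fun _ => b); split => //; rewrite big_ord1. Qed.
End IM.
End Closure.

Lemma Lses (R : comPzRingType) (A M N : lmodType R)
  (f : {linear A -> M}) (g : {linear M -> N}) :
  short_exact f g -> quad_presented N ->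
  forall r, Fitt M r <-> ideal_mul (Fitt A) (Fitt N) r.
Proof.
move=> ses qN r; have hI : forall a x, Fitt A x -> Fitt A (a * x) by move=> a x; apply: FittM.
split.
  move=> [k [c [gg [h ->]]]]; apply: (big_ind (ideal_mul (Fitt A) (Fitt N))).
  - exact: IM0.
  - exact: IMD.
  move=> i _; apply: IMM => //.
  have [a [p [ha [hp ->]]]] := @key2 _ _ _ _ f g _ ses qN (h i).
  by apply: IM_of; apply: Fitt_of.
move=> [k [a [b [h ->]]]]; apply: (big_ind (Fitt M)); [exact: Fitt0 | exact: FittD |].
move=> i _; have [[k1 [c1 [g1 [h1 ->]]]] [k2 [c2 [g2 [h2 ->]]]]] := h i.
rewrite mulr_suml; apply: (big_ind (Fitt M)); [exact: Fitt0 | exact: FittD |].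
move=> p _; rewrite mulr_sumr; apply: (big_ind (Fitt M)); [exact: Fitt0 | exact: FittD |].
move=> q _; rewrite mulrACA; apply: FittM; apply: Fitt_of.
exact: (@key1 _ _ _ _ f g _ _ ses (h1 p) (h2 q)).
Qed.

Theorem lemma2p7 (R : comPzRingType) (A B A' B' C : lmodType R)
  (f : {linear A -> B}) (g : {linear B -> C})
  (f' : {linear A' -> B'}) (g' : {linear B' -> C}) :
  quad_presented B -> quad_presented B' ->
  short_exact f g -> short_exact f' g' ->
  forall r : R,
    ideal_mul (Fitt A) (Fitt B') r <-> ideal_mul (Fitt A') (Fitt B) r.
Proof.
move=> qB qB' [finj [gsurj gker]] [finj' [gsurj' gker']] r.
have gf : forall a, g (f a) = 0 := fun a => (gker (f a)).2 (ex_intro _ a erefl).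
have gf' : forall a, g' (f' a) = 0 := fun a => (gker' (f' a)).2 (ex_intro _ a erefl).
have ex1 : short_exact (pbi1 g g' f gf) (pb2 g g').
  split; last split.
  - move=> a1 a2 /(congr1 (fun p : pb g g' => (val p).1)) /= /finj //.
  - move=> b'; have [b hb] := gsurj (g' b').
    have hin : (b, b') \in pbp g g' by rewrite unfold_in /pbp /= hb.
    by exists (@PB _ _ _ _ g g' (b, b') hin).
  - move=> p; split.
      case: p => [[b b'] hin] e; change (b' = 0) in e; subst b'.
      have : g b = 0 by move: hin; rewrite unfold_in /pbp /= linear0 => /eqP.
      move=> /gker [a ha]; exists a; apply: val_inj => /=; by rewrite ha.
    by move=> [a <-].
have ex2 : short_exact (pbi2 g g' f' gf') (pb1 g g').
  split; last split.
  - move=> a1 a2 /(congr1 (fun p : pb g g' => (val p).2)) /= /finj' //.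
  - move=> b; have [b' hb] := gsurj' (g b).
    have hin : (b, b') \in pbp g g' by rewrite unfold_in /pbp /= hb.
    by exists (@PB _ _ _ _ g g' (b, b') hin).
  - move=> p; split.
      case: p => [[b b'] hin] e; change (b = 0) in e; subst b.
      have : g' b' = 0 by move: hin; rewrite unfold_in /pbp /= linear0 => /eqP <-.
      move=> /gker' [a ha]; exists a; apply: val_inj => /=; by rewrite ha.
    by move=> [a <-].
exact: (iff_trans (iff_sym (@Lses _ _ _ _ _ _ ex1 qB' r)) (@Lses _ _ _ _ _ _ ex2 qB r)).
Qed.
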